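(* In the abstract boundary problem setting with an invertible reference operator described in the context, for all $u,v\in\mathcal D(T^* )$, $$\langle T^*u,v\rangle-\langle u,T^*v\rangle=\langle\bm\Gamma_1u,\Gamma_0v\rangle_{K,K'}-\langle\Gamma_0u,\bm\Gamma_1v\rangle_{K',K}.$$ (Here $\bm\Gamma_1u,\bm\Gamma_1v\in K$.)
   Context: Inner products are linear in the first argument and conjugate-linear in the second. Let $H_0$ be a separable Hilbert space with inner product $\langle\cdot,\cdot\rangle$, let $T$ be a closed densely defined symmetric operator in $H_0$ with adjoint $T^*$, and equip $\mathcal D(T^* )$ with the graph norm. Let $H_1\subset H_0$ be a dense subspace which is a Hilbert space in its own right with bounded inclusion $H_1\to H_0$. Let $K^\partial$ be a separable Hilbert space with inner product $\langle\cdot,\cdot\rangle_\partial$ and $K\subset K^\partial$ a dense subspace which is a Hilbert space in its own right with bounded inclusion. Let $K'$ be the space of continuous anti-linear functionals on $K$ (a Hilbert space with the dual norm); $K^\partial$ is regarded as a dense subspace of $K'$ via $y\mapsto(x\mapsto\langle y,x\rangle_\partial)$, so $K\subset K^\partial\subset K'$. For $y\in K'$, $x\in K$ put $\langle y,x\rangle_{K',K}=y(x)$ and $\langle x,y\rangle_{K,K'}=\overline{y(x)}$; these agree with $\langle\cdot,\cdot\rangle_\partial$ when $y\in K^\partial$. Standing assumptions: $H_1\subset\mathcal D(T^* )$ and $H_1$ is dense in $\mathcal D(T^* )$ in the graph norm; $T^*|_{H_1}:H_1\to H_0$ is bounded; $\gamma_0,\gamma_1:H_1\to K$ are bounded linear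 operators such that $\gamma=\gamma_0\oplus\gamma_1:H_1\to K\oplus K$ is surjective; $\operatorname{Ker}\gamma$ is dense in $H_0$ and $\mathcal D(T)=\operatorname{Ker}\gamma$; and the Lagrange identity $\langle T^*u,v\rangle-\langle u,T^*v\rangle=\langle\gamma_1u,\gamma_0v\rangle_\partial-\langle\gamma_0u,\gamma_1v\rangle_\partial$ holds for all $u,v\in H_1$. $\Gamma_0,\Gamma_1:\mathcal D(T^* )\to K'$ denote the (existing, unique) continuous extensions of $\gamma_0,\gamma_1$; they satisfy $\langle T^*u,v\rangle-\langle u,T^*v\rangle=\langle\Gamma_1u,\Gamma_0v\rangle_{K',K}-\langle\Gamma_0u,\Gamma_1v\rangle_{K',K}$ for $u\in\mathcal D(T^* )$, $v\in H_1$. Moreover $A$ is a self-adjoint operator in $H_0$ with $T\subset A\subset T^*$, $\mathcal D(A)=\operatorname{Ker}\gamma_0$ (so $\mathcal D(A)\subset H_1$), and $A$ has a bounded everywhere defined inverse. Then $\mathcal D(T^* )=\mathcal D(A)\dotplus\operatorname{Ker}T^*$ topologically, with projections $p=A^{-1}T^*$ onto $\mathcal D(A)$ and $k=1-p$ onto $\operatorname{Ker}T^*$, and $\Gamma_0$ restricts to a topological isomorphism $\operatorname{Ker}T^*\to K'$; let $\bm\gamma(0):K'\to\operatorname{Ker}T^*$ be its inverse, $M(0)=\Gamma_1\circ\bm\gamma(0):K'\to K'$, and define the reduced boundary operator $\bm\Gamma_1=\Gamma_1-M(0)\circ\Gamma_0:\mathcal D(T^* )\to K'$. *)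

(* Defs.v *)
From HB Require Import structures.
From mathcomp Require Import all_boot all_order all_algebra.
From mathcomp Require Export complex.
From mathcomp Require Export reals.
Set Implicit Arguments. Unset Strict Implicit. Unset Printing Implicit Defensive.
Import Order.TTheory GRing.Theory Num.Theory.
Local Open Scope ring_scope.

Section Hilbert.
Variable C : numClosedFieldType.

Definition subspace (V : lmodType C) (D : V -> Prop) : Prop :=
  D 0 /\ forall (a : C) (x y : V), D x -> D y -> D (a *: x + y).

Definition linear_map (V W : lmodType C) (f : V -> W) : Prop :=
  forall (a : C) (x y : V), f (a *: x + y) = a *: f x + f y.

Definition ipnorm (V : lmodType C) (ip : V -> V -> C) (x : V) : C :=
  sqrtC (ip x x).

Definition cvg_seq (V : lmodType C) (ip : V -> V -> C) (s : nat -> V) (l : V) :=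
  forall eps : C, 0 < eps -> exists N : nat,
      forall n, (N <= n)%N -> ipnorm ip (s n - l) < eps.

Definition cauchy_seq (V : lmodType C) (ip : V -> V -> C) (s : nat -> V) :=
  forall eps : C, 0 < eps -> exists N : nat,
      forall m n, (N <= m)%N -> (N <= n)%N -> ipnorm ip (s m - s n) < eps.

Definition is_hilbert (V : lmodType C) (ip : V -> V -> C) : Prop :=
  [/\ (forall (a : C) (x y z : V), ip (a *: x + y) z = a * ip x z + ip y z),
      (forall x y : V, ip y x = (ip x y)^*),
      (forall x : V, 0 <= ip x x),
      (forall x : V, ip x x = 0 -> x = 0) &
      (forall s : nat -> V, cauchy_seq ip s -> exists l, cvg_seq ip s l)].

Definition separable (V : lmodType C) (ip : V -> V -> C) : Prop :=
  exists d : nat -> V, forall (x : V) (eps : C), 0 < eps ->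
      exists n, ipnorm ip (x - d n) < eps.

Definition dense_in (V : lmodType C) (nrm : V -> C) (D E : V -> Prop) : Prop :=
  forall x : V, E x -> forall eps : C, 0 < eps ->
      exists y, D y /\ nrm (x - y) < eps.

Definition bounded_map (V W : lmodType C) (n1 : V -> C) (n2 : W -> C)
  (f : V -> W) : Prop :=
  exists M : C, forall x, n2 (f x) <= M * n1 x.

Definition closed_op (V : lmodType C) (ip : V -> V -> C)
  (D : V -> Prop) (T : V -> V) : Prop :=
  forall (s : nat -> V) (x y : V), (forall n, D (s n)) ->
    cvg_seq ip s x -> cvg_seq ip (fun n => T (s n)) y -> D x /\ T x = y.

Definition symmetric_op (V : lmodType C) (ip : V -> V -> C)
  (D : V -> Prop) (T : V -> V) : Prop :=
  forall u v, D u -> D v -> ip (T u) v = ip u (T v).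

Definition is_adjoint (V : lmodType C) (ip : V -> V -> C)
  (D : V -> Prop) (T : V -> V) (Ds : V -> Prop) (Ts : V -> V) : Prop :=
  (forall u, Ds u <-> exists w, forall v, D v -> ip (T v) u = ip v w) /\
  (forall u, Ds u -> forall v, D v -> ip (T v) u = ip v (Ts u)).

(* continuous anti-linear functionals on (K, ipK): the elements of K' *)
Definition antidual (K : lmodType C) (ipK : K -> K -> C) (f : K -> C) : Prop :=
  (forall (a : C) (x y : K), f (a *: x + y) = a^* * f x + f y) /\
  exists M : C, forall x, `|f x| <= M * ipnorm ipK x.

End Hilbert.

(* Main.v *)
Require Import Defs.
From HB Require Import structures.
From mathcomp Require Import all_boot all_order all_algebra.
From mathcomp Require Import complex reals.
From Stdlib Require Import FunctionalExtensionality.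
Set Implicit Arguments. Unset Strict Implicit.
Import Order.TTheory GRing.Theory Num.Theory.
Local Open Scope ring_scope.


Lemma ip0l (C : numClosedFieldType) (V : lmodType C) (ip : V -> V -> C) :
  is_hilbert ip -> forall z, ip 0 z = 0.
Proof.
case=> hl _ _ _ _ z. have := hl 1 0 0 z. rewrite scale1r addr0 mul1r.
by move/(congr1 (fun t => t - ip 0 z)); rewrite subrr addrK.
Qed.

Lemma ipDl (C : numClosedFieldType) (V : lmodType C) (ip : V -> V -> C) :
  is_hilbert ip -> forall x y z, ip (x + y) z = ip x z + ip y z.
Proof. case=> hl _ _ _ _ x y z. by rewrite -[x in LHS]scale1r hl mul1r. Qed.

Lemma ipZl (C : numClosedFieldType) (V : lmodType C) (ip : V -> V -> C) :
  is_hilbert ip -> forall a x z, ip (a *: x) z = a * ip x z.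
Proof.
move=> h a x z; have := h; case=> hl _ _ _ _.
by rewrite -[a *: x]addr0 hl (ip0l h) addr0.
Qed.

Lemma ipNl (C : numClosedFieldType) (V : lmodType C) (ip : V -> V -> C) :
  is_hilbert ip -> forall x z, ip (- x) z = - ip x z.
Proof. move=> h x z; by rewrite -scaleN1r (ipZl h) mulN1r. Qed.

Lemma ip0r (C : numClosedFieldType) (V : lmodType C) (ip : V -> V -> C) :
  is_hilbert ip -> forall z, ip z 0 = 0.
Proof. move=> h z; have := h; case=> _ hc _ _ _. by rewrite hc (ip0l h) conjC0. Qed.

Lemma ipDr (C : numClosedFieldType) (V : lmodType C) (ip : V -> V -> C) :
  is_hilbert ip -> forall x y z, ip z (x + y) = ip z x + ip z y.
Proof.
move=> h x y z; have := h; case=> _ hc _ _ _.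
by rewrite (hc (x+y) z) (hc x z) (hc y z) (ipDl h) rmorphD.
Qed.

Lemma ipZr (C : numClosedFieldType) (V : lmodType C) (ip : V -> V -> C) :
  is_hilbert ip -> forall a x z, ip z (a *: x) = a^* * ip z x.
Proof.
move=> h a x z; have := h; case=> _ hc _ _ _.
by rewrite (hc (a*:x) z) (hc x z) (ipZl h) rmorphM.
Qed.

Lemma ipNr (C : numClosedFieldType) (V : lmodType C) (ip : V -> V -> C) :
  is_hilbert ip -> forall x z, ip z (- x) = - ip z x.
Proof. move=> h x z; by rewrite -scaleN1r (ipZr h) rmorphN rmorph1 mulN1r. Qed.

Lemma orth_dense (C : numClosedFieldType) (V : lmodType C) (ip : V -> V -> C)
  (D : V -> Prop) : is_hilbert ip -> dense_in (ipnorm ip) D (fun _ => True) ->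
  forall d, (forall y, D y -> ip y d = 0) -> d = 0.
Proof.
move=> h hd d hy; have := h; case=> _ hc hpos hdef _.
apply: hdef; apply/eqP; apply: contraT => hne.
have hgt : 0 < ip d d by rewrite lt_def hne hpos.
have := hd d I (sqrtC (ip d d)); rewrite sqrtC_gt0 => /(_ hgt) [y [Dy]].
have e : ip (d - y) (d - y) = ip d d + ip y y.
  rewrite (ipDl h) !(ipDr h) (ipNl h) !(ipNr h) (ipNl h).
  rewrite (hc y d) (hy y Dy) conjC0.
  by rewrite !(oppr0, subr0, add0r, opprK).
rewrite /ipnorm e ltr_sqrtC ?lt_def ?negbK; first last.
- by rewrite qualifE /= hpos.
- by rewrite qualifE /= addr_ge0.
case/andP=> ne le; move: ne.
have -> : ip y y = 0 by apply/eqP; rewrite eq_le hpos andbT -(gerDl (ip d d)).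
by rewrite addr0 eqxx.
Qed.

Lemma dbl0 (Z : zmodType) (x : Z) : x = x + x -> x = 0.
Proof. by move/(congr1 (fun t => t - x)); rewrite subrr addrK. Qed.

Lemma lin0 (C : numClosedFieldType) (V W : lmodType C) (f : V -> W) :
  linear_map f -> f 0 = 0.
Proof. move=> hf; apply: dbl0; by rewrite -{1}(addr0 0) -{1}(scale1r 0) hf scale1r. Qed.

Lemma linB (C : numClosedFieldType) (V W : lmodType C) (f : V -> W) :
  linear_map f -> forall x y, f (x - y) = f x - f y.
Proof. move=> hf x y; by rewrite -scaleN1r addrC hf scaleN1r addrC. Qed.

Lemma antidual0 (C : numClosedFieldType) (V : lmodType C) (ip : V -> V -> C) f :
  antidual ip f -> f 0 = 0.
Proof.
case=> hf _; apply: dbl0; have := hf 1 0 0.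
by rewrite scale1r addr0 rmorph1 mul1r.
Qed.

Lemma adj_lin (C : numClosedFieldType) (V : lmodType C) (ip : V -> V -> C)
  D T Ds Ts : is_hilbert ip -> dense_in (ipnorm ip) D (fun _ => True) ->
  is_adjoint ip D T Ds Ts -> forall a u w, Ds u -> Ds w ->
  Ds (a *: u + w) /\ Ts (a *: u + w) = a *: Ts u + Ts w.
Proof.
move=> h hd [hD hT] a u w Du Dw.
have key : forall v, D v -> ip (T v) (a *: u + w) = ip v (a *: Ts u + Ts w).
  move=> v Dv.
  by rewrite (ipDr h) (ipZr h) (hT u Du v Dv) (hT w Dw v Dv) (ipDr h) (ipZr h).
have Dn : Ds (a *: u + w) by apply/hD; exists (a *: Ts u + Ts w).
split=> //.
apply/eqP; rewrite -subr_eq0; apply/eqP; apply: (orth_dense h hd) => v Dv.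
by rewrite (ipDr h) (ipNr h) -(hT _ Dn v Dv) key // subrr.
Qed.

Theorem lemma4p8
  (R : realType)
  (* H0 *)
  (H0 : lmodType R[i]) (ip0 : H0 -> H0 -> R[i])
  (hH0 : is_hilbert ip0) (sH0 : separable ip0)
  (* T and its adjoint Tstar *)
  (DT : H0 -> Prop) (T : H0 -> H0) (Ds : H0 -> Prop) (Ts : H0 -> H0)
  (hDT : subspace DT) (hTlin : forall a x y, DT x -> DT y -> T (a *: x + y) = a *: T x + T y)
  (hDTdense : dense_in (ipnorm ip0) DT (fun _ => True))
  (hTclosed : closed_op ip0 DT T) (hTsym : symmetric_op ip0 DT T)
  (hadj : is_adjoint ip0 DT T Ds Ts)
  (* H1, a Hilbert space continuously and densely embedded in H0 *)
  (H1 : lmodType R[i]) (ip1 : H1 -> H1 -> R[i]) (hH1 : is_hilbert ip1)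
  (iota : H1 -> H0) (hiota_lin : linear_map iota) (hiota_inj : injective iota)
  (hiota_bd : bounded_map (ipnorm ip1) (ipnorm ip0) iota)
  (hiota_dense : dense_in (ipnorm ip0) (fun x => exists h, x = iota h) (fun _ => True))
  (* K^∂ and K, K densely and continuously embedded in K^∂ *)
  (Kd : lmodType R[i]) (ipd : Kd -> Kd -> R[i]) (hKd : is_hilbert ipd) (sKd : separable ipd)
  (K : lmodType R[i]) (ipK : K -> K -> R[i]) (hK : is_hilbert ipK)
  (jK : K -> Kd) (hj_lin : linear_map jK) (hj_inj : injective jK)
  (hj_bd : bounded_map (ipnorm ipK) (ipnorm ipd) jK)
  (hj_dense : dense_in (ipnorm ipd) (fun y => exists x, y = jK x) (fun _ => True))
  (* standing assumptions *)
  (hH1D : forall h, Ds (iota h))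
  (hH1dense : dense_in (fun u => sqrtC (ip0 u u + ip0 (Ts u) (Ts u)))
                (fun u => exists h, u = iota h) Ds)
  (hTsH1 : bounded_map (ipnorm ip1) (ipnorm ip0) (fun h => Ts (iota h)))
  (g0 g1 : H1 -> K) (hg0lin : linear_map g0) (hg1lin : linear_map g1)
  (hg0bd : bounded_map (ipnorm ip1) (ipnorm ipK) g0)
  (hg1bd : bounded_map (ipnorm ip1) (ipnorm ipK) g1)
  (hgsurj : forall a b : K, exists h, g0 h = a /\ g1 h = b)
  (hkerdense : dense_in (ipnorm ip0) (fun x => exists h, x = iota h /\ g0 h = 0 /\ g1 h = 0)
                 (fun _ => True))
  (hDTker : forall x, DT x <-> exists h, x = iota h /\ g0 h = 0 /\ g1 h = 0)
  (hLag : forall u v : H1,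
      ip0 (Ts (iota u)) (iota v) - ip0 (iota u) (Ts (iota v)) =
      ipd (jK (g1 u)) (jK (g0 v)) - ipd (jK (g0 u)) (jK (g1 v)))
  (* Γ0, Γ1 : D(Tstar) -> K', the continuous extensions of γ0, γ1 *)
  (G0 G1 : H0 -> (K -> R[i]))
  (hG0K' : forall u, Ds u -> antidual ipK (G0 u))
  (hG1K' : forall u, Ds u -> antidual ipK (G1 u))
  (hG0lin : forall a u v, Ds u -> Ds v -> G0 (a *: u + v) = (fun x => a * G0 u x + G0 v x))
  (hG1lin : forall a u v, Ds u -> Ds v -> G1 (a *: u + v) = (fun x => a * G1 u x + G1 v x))
  (hG0bd : exists M, forall u, Ds u -> forall x,
      `|G0 u x| <= M * sqrtC (ip0 u u + ip0 (Ts u) (Ts u)) * ipnorm ipK x)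
  (hG1bd : exists M, forall u, Ds u -> forall x,
      `|G1 u x| <= M * sqrtC (ip0 u u + ip0 (Ts u) (Ts u)) * ipnorm ipK x)
  (hG0ext : forall h, G0 (iota h) = (fun x => ipd (jK (g0 h)) (jK x)))
  (hG1ext : forall h, G1 (iota h) = (fun x => ipd (jK (g1 h)) (jK x)))
  (hLagG : forall u v, Ds u ->
      ip0 (Ts u) (iota v) - ip0 u (Ts (iota v)) = G1 u (g0 v) - G0 u (g1 v))
  (* the reference operator A *)
  (DA : H0 -> Prop) (A : H0 -> H0)
  (hDA : subspace DA) (hAlin : forall a x y, DA x -> DA y -> A (a *: x + y) = a *: A x + A y)
  (hAdense : dense_in (ipnorm ip0) DA (fun _ => True))
  (hAsa : is_adjoint ip0 DA A DA A)
  (hTA : forall x, DT x -> DA x /\ A x = T x)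
  (hATs : forall x, DA x -> Ds x /\ Ts x = A x)
  (hDAker : forall x, DA x <-> exists h, x = iota h /\ g0 h = 0)
  (Ainv : H0 -> H0) (hAinv_lin : linear_map Ainv)
  (hAinv_bd : bounded_map (ipnorm ip0) (ipnorm ip0) Ainv)
  (hAinv_r : forall x, DA (Ainv x) /\ A (Ainv x) = x)
  (hAinv_l : forall x, DA x -> Ainv (A x) = x)
  (* γ(0) : K' -> Ker Tstar, inverse of Γ0 restricted to Ker Tstar *)
  (gam0 : (K -> R[i]) -> H0)
  (hgam0 : forall phi, antidual ipK phi ->
      Ds (gam0 phi) /\ Ts (gam0 phi) = 0 /\ G0 (gam0 phi) = phi)
  (hgam0' : forall u, Ds u -> Ts u = 0 -> gam0 (G0 u) = u) :
  let M0 := fun phi : K -> R[i] => G1 (gam0 phi) in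
  let bG1 := fun u : H0 => (fun x : K => G1 u x - M0 (G0 u) x) in
  let embK := fun a : K => (fun x : K => ipd (jK a) (jK x)) in
  (forall u, Ds u -> exists a : K, bG1 u = embK a) /\
  (forall (u v : H0) (a b : K), Ds u -> Ds v -> bG1 u = embK a -> bG1 v = embK b ->
     ip0 (Ts u) v - ip0 u (Ts v) = (G0 v a)^* - G0 u b).
Proof.
move=> M0 bG1 embK.
have [hD hT] := hadj.
have Tsl := adj_lin hH0 hDTdense hadj.
have Ds0 : Ds 0 by apply/hD; exists 0 => v _; rewrite !(ip0r hH0).
have Ts0 : Ts 0 = 0.
  have [_ e] := Tsl 1 0 0 Ds0 Ds0; move: e; rewrite !scale1r addr0; exact: dbl0.
have G00 : G0 0 = (fun _ => 0).
  have e := hG0lin 1 0 0 Ds0 Ds0; rewrite scale1r addr0 in e.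
  apply: functional_extensionality => x; apply: dbl0.
  by have := congr1 (fun f => f x) e; rewrite /= mul1r.
have jK0 : jK 0 = 0 := lin0 hj_lin.
have G0i0 : forall h, g0 h = 0 -> G0 (iota h) = (fun _ => 0).
  move=> h eh; rewrite hG0ext; apply: functional_extensionality => x.
  by rewrite eh jK0 (ip0l hKd).
have decomp : forall u, Ds u -> exists h, g0 h = 0 /\ u = gam0 (G0 u) + iota h.
  move=> u Du.
  have [Dk [Tk Gk]] := hgam0 (G0 u) (hG0K' u Du).
  set k := gam0 (G0 u) in Dk Tk Gk *.
  have [DAp Ap] := hAinv_r (Ts u).
  set p := Ainv (Ts u) in DAp Ap *.
  have [Dp Tp] := hATs p DAp.
  have [h [ep eh]] := (hDAker p).1 DAp.
  exists h; split=> //; rewrite -ep.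
  have [Dd1 Td1] := Tsl (-1) p u Dp Du.
  have [Dd Td] := Tsl (-1) k _ Dk Dd1.
  have Tdz : Ts ((-1) *: k + ((-1) *: p + u)) = 0.
    by rewrite Td Td1 Tk Tp Ap scaler0 add0r scaleN1r addNr.
  have Gdz : G0 ((-1) *: k + ((-1) *: p + u)) = G0 0.
    rewrite hG0lin // hG0lin // Gk ep (G0i0 h eh) G00.
    by apply: functional_extensionality => x /=; rewrite mulr0 add0r mulN1r addNr.
  have d0 : (-1) *: k + ((-1) *: p + u) = 0.
    by rewrite -(hgam0' _ Dd Tdz) Gdz (hgam0' 0 Ds0 Ts0).
  move: d0; rewrite !scaleN1r addrA -opprD addrC => /eqP; rewrite subr_eq0 => /eqP ->.
  by rewrite ep.
have P1 : forall u h, Ds u -> g0 h = 0 -> u = gam0 (G0 u) + iota h ->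
    bG1 u = embK (g1 h).
  move=> u h Du eh eu.
  have [Dk [Tk Gk]] := hgam0 (G0 u) (hG0K' u Du).
  rewrite /bG1 /M0 /embK; set k := gam0 (G0 u) in Dk Tk Gk eu *.
  apply: functional_extensionality => x.
  have e1 := hG1lin 1 k (iota h) Dk (hH1D h); rewrite scale1r in e1.
  by rewrite {1}eu e1 /= mul1r addrAC subrr add0r hG1ext.
have embinj : forall a c, embK a = embK c -> a = c.
  move=> a c e; have := congr1 (fun f => f (a - c)) e; rewrite /embK /=.
  move/eqP; rewrite -subr_eq0 -(ipNl hKd) -(ipDl hKd) -(linB hj_lin).
  have [_ _ _ hdef _] := hKd.
  move/eqP/hdef; rewrite -jK0 => /hj_inj /eqP; rewrite subr_eq0 => /eqP //.
split.
  move=> u Du; have [h [eh eu]] := decomp u Du; exists (g1 h); exact: P1.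
move=> u v a b Du Dv ea eb.
have [h [eh eu]] := decomp u Du.
have [h' [eh' ev]] := decomp v Dv.
have -> : a = g1 h by apply: embinj; rewrite -ea (P1 u h).
have -> : b = g1 h' by apply: embinj; rewrite -eb (P1 v h').
have [Dk [Tk Gk]] := hgam0 (G0 u) (hG0K' u Du).
have [Dk' [Tk' Gk']] := hgam0 (G0 v) (hG0K' v Dv).
set k := gam0 (G0 u) in Dk Tk Gk eu.
set k' := gam0 (G0 v) in Dk' Tk' Gk' ev.
have TuX : Ts u = Ts (iota h).
  have [_ e] := Tsl 1 k (iota h) Dk (hH1D h).
  by rewrite {1}eu -(scale1r k) e scale1r Tk add0r.
have Tv : Ts v = Ts (iota h').
  have [_ e] := Tsl 1 k' (iota h') Dk' (hH1D h').
  by rewrite {1}ev -(scale1r k') e scale1r Tk' add0r.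
have L1 := hLagG u h' Du.
rewrite eh' (antidual0 (hG1K' u Du)) sub0r TuX in L1.
have L2 := hLagG k' h Dk'.
rewrite Tk' (ip0l hH0) eh (antidual0 (hG1K' k' Dk')) !sub0r in L2.
have L2' := oppr_inj L2.
have G0v : G0 v (g1 h) = G0 k' (g1 h).
  have e := hG0lin 1 k' (iota h') Dk' (hH1D h'); rewrite scale1r in e.
  by rewrite {1}ev e /= mul1r (G0i0 h' eh') addr0.
have [_ hc _ _ _] := hH0.
rewrite G0v Tv {1}ev (ipDr hH0) -addrA TuX L1 (hc k') L2'.
done.
Qed.
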